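(* Let $k,\ell\ge 2$ be integers, $\alpha>0$, and let $\mathcal{C}$ be a non-empty $\alpha$-rich collection of $2\ell$-cycles in a graph $G$. If $\alpha\ge k\ell$, then $G$ contains a copy of $P_{k,\ell}$.
   Context: For $\alpha>0$ and $\ell\ge 2$, a collection $\mathcal{C}$ of labelled $2\ell$-cycles $x_1x_2\cdots x_{2\ell}x_1$ (with distinct vertices) in $G$ is $\alpha$-rich if for every member $x_1\cdots x_{2\ell}x_1\in\mathcal{C}$ and every $1\le i\le 2\ell$ there exist at least $\alpha$ distinct vertices $x_i'$ such that $x_1\cdots x_{i-1}x_i'x_{i+1}\cdots x_{2\ell}x_1\in\mathcal{C}$. The quadrangulated cylinder $P_{k,\ell}$ has vertex set $\{x_{i,j}:1\le i\le k,1\le j\le\ell\}$ and edges $x_{i,j}x_{i+1,j}$ ($1\le i\le k-1$, $1\le j\le\ell$), $x_{i,j+1}x_{i+1,j}$ ($1\le i\le k-1$ odd, $1\le j\le\ell$), $x_{i,j}x_{i+1,j+1}$ ($1\le i\le k-1$ even, $1\le j\le\ell$), with $x_{i,\ell+1}=x_{i,1}$. *)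

(* Defs.v *)
From mathcomp Require Import all_boot all_order all_algebra.
Set Implicit Arguments. Unset Strict Implicit. Unset Printing Implicit Defensive.
Import Order.TTheory GRing.Theory Num.Theory.


(* A (finite simple) graph G is given by a vertex type T : finType and a
   symmetric irreflexive adjacency relation e : rel T. *)

(* A labelled 2l-cycle x_1 ... x_{2l} x_1 is a map x : 'I_(2*l) -> T
   (0-indexed) with distinct values and consecutive (cyclically) vertices
   adjacent. *)
Definition is_cycle (T : finType) (e : rel T) (l : nat)
    (x : {ffun 'I_(2 * l) -> T}) : Prop :=
  injective x /\
  forall i j : 'I_(2 * l), val j = (val i).+1 %% (2 * l) -> e (x i) (x j).

Definition replace_at (T : finType) (n : nat) (x : {ffun 'I_n -> T})
    (i : 'I_n) (y : T) : {ffun 'I_n -> T} :=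
  [ffun j => if j == i then y else x j].

Definition rich (R : numDomainType) (T : finType) (l : nat) (alpha : R)
    (C : {set {ffun 'I_(2 * l) -> T}}) : Prop :=
  forall x, x \in C -> forall i : 'I_(2 * l),
    (alpha <= (#|[set y : T | replace_at x i y \in C]|)%:R)%R.

(* Directed "upward" adjacency of the quadrangulated cylinder P_{k,l}, with
   0-indexed rows i (paper row i+1) and columns j (paper column j+1).
   Paper edges: x_{i,j}x_{i+1,j}; for paper i odd (0-indexed even)
   x_{i,j+1}x_{i+1,j}; for paper i even (0-indexed odd) x_{i,j}x_{i+1,j+1};
   column indices taken cyclically mod l. *)
Definition cyl_up (l : nat) (i j i' j' : nat) : bool :=
  (i' == i.+1) &&
  [|| j' == j | if odd i then j' == j.+1 %% l else j == j'.+1 %% l].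

Definition cyl_edge (k l : nat) (a b : 'I_k * 'I_l) : bool :=
  cyl_up l a.1 a.2 b.1 b.2 || cyl_up l b.1 b.2 a.1 a.2.

Definition contains_cyl (T : finType) (e : rel T) (k l : nat) : Prop :=
  exists f : 'I_k * 'I_l -> T,
    injective f /\ forall a b, cyl_edge a b -> e (f a) (f b).

(* Main.v *)
Require Import Defs.
From mathcomp Require Import all_boot all_order all_algebra.
From mathcomp Require Import zify.
Import Order.TTheory GRing.Theory Num.Theory.

Definition rowof (r m p : nat) : nat :=
  if p %% 2 == r %% 2 then r else if p %/ 2 < m then r.+1 else r.-1.

Definition filled (l r m i j : nat) : bool :=
  ((i <= r) && (j < l)) || ((i == r.+1) && (j < m)).

Definition Inv (T : finType) (e : rel T) (l : nat)
  (C : {set {ffun 'I_(2 * l) -> T}}) (r m : nat) (g : nat -> nat -> T)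
  (y : {ffun 'I_(2 * l) -> T}) : Prop :=
  [/\ y \in C,
      (forall p : 'I_(2 * l), y p = g (rowof r m p) (p %/ 2)),
      (forall i j i' j', filled l r m i j -> filled l r m i' j' ->
           g i j = g i' j' -> i = i' /\ j = j') &
      (forall i j j', i < r -> j < l -> j' < l -> cyl_up l i j i.+1 j' ->
           e (g i j) (g i.+1 j'))].

Lemma step_fresh (T : finType) (e : rel T) (l k : nat)
  (C : {set {ffun 'I_(2 * l) -> T}}) r m g y :
  (forall x, x \in C -> forall i : 'I_(2 * l),
      k * l <= #|[set v : T | replace_at x i v \in C]|) ->
  @Inv T e l C r m g y -> m < l -> r.+1 < k ->
  exists g' y', @Inv T e l C r m.+1 g' y'.
Proof.
move=> hrich [yC Hy Hinj Hedge] ml rk.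
have pml : 2 * m + r.+1 %% 2 < 2 * l by lia.
set p := Ordinal pml.
set S := [set v : T | replace_at y p v \in C].
set U := [seq g i j | i <- iota 0 r.+1, j <- iota 0 l] ++
         [seq g r.+1 j | j <- iota 0 m].
have sU : size U = r.+1 * l + m.
  by rewrite size_cat size_allpairs size_map !size_iota.
have inU : forall i j, filled l r m i j -> g i j \in U.
  move=> i j; rewrite /filled => /orP [/andP [hi hj]|/andP [/eqP -> hj]].
    by rewrite mem_cat; apply/orP; left; apply: allpairs_f; rewrite mem_iota; lia.
  by rewrite mem_cat; apply/orP; right; apply: map_f; rewrite mem_iota; lia.
have : ~~ (S \subset U).
  apply/negP => sub.
  have h1 := subset_leq_card sub.
  have h2 := card_size U.
  have h3 := hrich y yC p.
  have : k * l <= r.+1 * l + m by rewrite -sU; apply: leq_trans h3 (leq_trans h1 h2).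
  have : r.+2 * l <= k * l by apply: leq_mul.
  rewrite !mulSn; lia.
case/subsetPn => v vS vU.
exists (fun i j => if (i == r.+1) && (j == m) then v else g i j).
exists (replace_at y p v).
split.
- by move: vS; rewrite inE.
- move=> q; rewrite /replace_at ffunE.
  case: ifP => [/eqP -> | qp].
    have e1 : (val p %% 2 == r %% 2) = false by rewrite /=; lia.
    have e2 : val p %/ 2 = m by rewrite /=; lia.
    by rewrite /rowof e1 e2 ltnSn !eqxx.
  have qp' : (q : nat) != 2 * m + r.+1 %% 2 by apply: contraFneq qp => h; apply/eqP/val_inj.
  rewrite Hy /rowof.
  case: ifP => h1.
    by have -> : (r == r.+1) = false by lia.
  case: ifP => h2.
    have -> : q %/ 2 < m.+1 by lia.
    have hh : (q %/ 2 == m) = false by move: qp' h1; rewrite /=; lia.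
    by rewrite hh andbF.
  have -> : (q %/ 2 < m.+1) = false by move: qp' h1 h2; rewrite /=; lia.
  by have -> : (r.-1 == r.+1) = false by lia.
- move=> i j i' j' f1 f2.
  case: ifP => c1; case: ifP => c2.
  + by move=> _; lia.
  + move=> E; exfalso; move/negP: vU; apply.
    rewrite E; apply: inU; move: f2 c2; rewrite /filled; lia.
  + move=> E; exfalso; move/negP: vU; apply.
    rewrite -E; apply: inU; move: f1 c1; rewrite /filled; lia.
  + apply: Hinj; move: f1 f2 c1 c2; rewrite /filled; lia.
- move=> i j j' ir jl jl' cu.
  have -> : (i == r.+1) = false by lia.
  have -> : (i.+1 == r.+1) = false by lia.
  exact: Hedge.
Qed.

Arguments step_fresh {T e l k C r m g y}.

Lemma modS_cases a n : a < n ->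
  (a.+1 %% n = a.+1 /\ a.+1 < n) \/ (a.+1 = n /\ a.+1 %% n = 0).
Proof.
move=> an; case: (ltngtP a.+1 n) => h.
- by left; rewrite modn_small.
- lia.
- by right; rewrite h modnn.
Qed.

Lemma step_row (T : finType) (e : rel T) (l : nat)
  (C : {set {ffun 'I_(2 * l) -> T}}) r g y :
  symmetric e -> (forall x, x \in C -> is_cycle e x) ->
  @Inv T e l C r l g y -> @Inv T e l C r.+1 0 g y.
Proof.
move=> esym hcyc [yC Hy Hinj Hedge].
have rowE : forall q, q < 2 * l -> rowof r l q = rowof r.+1 0 q.
  move=> q ql; rewrite /rowof ltn0.
  case: ifP => h1.
    by have -> : (q %% 2 == r.+1 %% 2) = false by lia.
  have -> : q %/ 2 < l by lia.
  by have -> : (q %% 2 == r.+1 %% 2) by lia.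
have filE : forall i j, filled l r l i j = filled l r.+1 0 i j.
  by move=> i j; rewrite /filled; lia.
have Hy' : forall q (hq : q < 2 * l), y (Ordinal hq) = g (rowof r l q) (q %/ 2).
  by move=> q hq; rewrite Hy.
have [_ Hc] := hcyc y yC.
have cyc : forall a b (ha : a < 2 * l) (hb : b < 2 * l), b = a.+1 %% (2 * l) ->
    e (y (Ordinal ha)) (y (Ordinal hb)).
  by move=> a b ha hb h; apply: Hc.
split => //.
- by move=> q; rewrite Hy rowE.
- by move=> i j i' j'; rewrite -!filE; apply: Hinj.
move=> i j j' ir jl jl' cu.
have [ilt|ieq] : i < r \/ i = r by lia.
  exact: Hedge.
subst i.
have ha : 2 * j + r %% 2 < 2 * l by lia.
have hb : 2 * j' + r.+1 %% 2 < 2 * l by lia.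
have gA : g r j = y (Ordinal ha).
  rewrite Hy' /rowof.
  have -> : (2 * j + r %% 2) %% 2 == r %% 2 by lia.
  by have -> : (2 * j + r %% 2) %/ 2 = j by lia.
have gB : g r.+1 j' = y (Ordinal hb).
  rewrite Hy' /rowof.
  have -> : ((2 * j' + r.+1 %% 2) %% 2 == r %% 2) = false by lia.
  have -> : (2 * j' + r.+1 %% 2) %/ 2 < l by lia.
  by have -> : (2 * j' + r.+1 %% 2) %/ 2 = j' by lia.
rewrite gA gB.
have [hr|hr] : r %% 2 = 0 \/ r %% 2 = 1 by lia.
- have ho : odd r = false by move: hr; rewrite modn2; case: (odd r).
  move: cu; rewrite /cyl_up ho eqxx /= => /orP [/eqP jj | /eqP jj].
    apply: cyc; have := modS_cases _ _ ha; lia.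
  rewrite esym; apply: cyc.
  have := modS_cases _ _ hb; have := modS_cases _ _ jl'; lia.
- have ho : odd r = true by move: hr; rewrite modn2; case: (odd r).
  move: cu; rewrite /cyl_up ho eqxx /= => /orP [/eqP jj | /eqP jj].
    rewrite esym; apply: cyc; have := modS_cases _ _ hb; lia.
  apply: cyc; have := modS_cases _ _ ha; have := modS_cases _ _ jl; lia.
Qed.

Arguments step_row {T e l C r g y}.

Lemma init_inv (T : finType) (e : rel T) (l : nat)
  (C : {set {ffun 'I_(2 * l) -> T}}) :
  0 < l -> (forall x, x \in C -> is_cycle e x) -> C != set0 ->
  exists g y, @Inv T e l C 0 l g y.
Proof.
move=> l0 hcyc /set0Pn [y0 y0C].
have pf : 0 < 2 * l by lia.
pose o0 : 'I_(2 * l) := Ordinal pf.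
pose yn q := y0 (insubd o0 q).
have ynE : forall q (hq : q < 2 * l), yn q = y0 (Ordinal hq).
  move=> q hq; rewrite /yn; congr (y0 _); apply: val_inj => /=.
  by rewrite insubdK.
have [y0inj _] := hcyc y0 y0C.
exists (fun i j => yn (2 * j + i)), y0; split => //.
- move=> p.
  have hp : 2 * (p %/ 2) + rowof 0 l p < 2 * l.
    have := ltn_ord p; rewrite /rowof; case: ifP => ?; [|case: ifP => ?]; lia.
  rewrite (ynE _ hp); congr (y0 _); apply: val_inj => /=.
  have := ltn_ord p; rewrite /rowof; case: ifP => ?; [|case: ifP => ?]; lia.
- move=> i j i' j' f1 f2.
  have h1 : 2 * j + i < 2 * l by move: f1; rewrite /filled; lia.
  have h2 : 2 * j' + i' < 2 * l by move: f2; rewrite /filled; lia.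
  rewrite (ynE _ h1) (ynE _ h2) => /y0inj /(congr1 val) /= E.
  move: f1 f2 E; rewrite /filled; lia.
Qed.

Arguments init_inv {T} e {l C}.

Lemma iter_fresh (T : finType) (e : rel T) (l k : nat)
  (C : {set {ffun 'I_(2 * l) -> T}}) r g y :
  (forall x, x \in C -> forall i : 'I_(2 * l),
      k * l <= #|[set v : T | replace_at x i v \in C]|) ->
  @Inv T e l C r 0 g y -> r.+1 < k ->
  forall m, m <= l -> exists g' y', @Inv T e l C r m g' y'.
Proof.
move=> hrich hI rk; elim=> [|m IH] ml; first by exists g, y.
have [g' [y' hI']] := IH (ltnW ml).
exact: (step_fresh hrich hI' ml rk).
Qed.

Arguments iter_fresh {T e l k C r g y}.

Lemma reach (T : finType) (e : rel T) (l k : nat)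
  (C : {set {ffun 'I_(2 * l) -> T}}) :
  0 < l -> symmetric e -> (forall x, x \in C -> is_cycle e x) -> C != set0 ->
  (forall x, x \in C -> forall i : 'I_(2 * l),
      k * l <= #|[set v : T | replace_at x i v \in C]|) ->
  forall r, 0 < r -> r < k -> exists g y, @Inv T e l C r 0 g y.
Proof.
move=> l0 esym hcyc Cn hrich; elim=> [//|r IH] _ rk.
case: r IH rk => [|r] IH rk.
  have [g [y hI]] := init_inv e l0 hcyc Cn.
  by exists g, y; apply: step_row.
have [g [y hI]] := IH isT (ltnW rk).
have [g' [y' hI']] := iter_fresh hrich hI rk l (leqnn l).
by exists g', y'; apply: step_row.
Qed.

Arguments reach {T} e {l k C}.

Local Open Scope ring_scope.

Theorem proposition3p4 (T : finType) (e : rel T) (R : realFieldType)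
    (k l : nat) (alpha : R) (C : {set {ffun 'I_(2 * l) -> T}}) :
  symmetric e -> irreflexive e ->
  (2 <= k)%N -> (2 <= l)%N -> 0 < alpha ->
  (forall x, x \in C -> is_cycle e x) ->
  C != set0 ->
  rich alpha C ->
  (k * l)%:R <= alpha ->
  contains_cyl e k l.
Proof.
move=> esym _ k2 l2 _ hcyc Cn hr hal.
have hrich : forall x, x \in C -> forall i : 'I_(2 * l),
    (k * l <= #|[set v : T | replace_at x i v \in C]|)%N.
  move=> x xC i; rewrite -(ler_nat R); exact: le_trans hal (hr x xC i).
have kp : (0 < k.-1)%N by lia.
have kl : (k.-1 < k)%N by lia.
have [g [y [_ _ Hinj Hedge]]] :=
  reach e (ltnW l2) esym hcyc Cn hrich k.-1 kp kl.
exists (fun a : 'I_k * 'I_l => g a.1 a.2); split.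
    move=> [a1 a2] [b1 b2] /= E.
    have fa : filled l k.-1 0 a1 a2.
      by rewrite /filled; have := ltn_ord a1; have := ltn_ord a2; lia.
    have fb : filled l k.-1 0 b1 b2.
      by rewrite /filled; have := ltn_ord b1; have := ltn_ord b2; lia.
    have [E1 E2] := Hinj _ _ _ _ fa fb E.
    by congr pair; apply: val_inj.
  move=> [a1 a2] [b1 b2]; rewrite /cyl_edge /= => /orP [h|h].
    have E : (b1 : nat) = a1.+1 by move: h; rewrite /cyl_up; case/andP => /eqP.
    rewrite E; apply: Hedge => //; last by rewrite -E.
    by have := ltn_ord b1; lia.
  have E : (a1 : nat) = b1.+1 by move: h; rewrite /cyl_up; case/andP => /eqP.
  rewrite esym E; apply: Hedge => //; last by rewrite -E.
  by have := ltn_ord a1; lia.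
Qed.
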